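(* Run Algorithm 1 on an instance of Problem (P); suppose it performs $k$ iterations and the indices chosen as $i^*$ are $i_1,i_2,\dots,i_k$ in order, and let $x_1,\dots,x_n$ be the values of the variables after the last iteration. Then there exists an optimal solution $(x_1^*,\dots,x_n^* )$ of Problem (P) such that $x_{i_j}^*=x_{i_j}$ for all $j=1,\dots,k$.
   Context: Problem (P): given an integer $n\ge1$, reals $0<q_1\le\cdots\le q_n$, $z_1,\dots,z_n>0$ and $K>0$, maximize $\sum_{i=1}^n x_i$ subject to $0\le x_i\le q_i$ for all $i$, $0\le x_1\le x_2\le\cdots\le x_n$, and $\sum_{i=1}^n z_ix_i\le K$. For $1\le i<j\le n+1$ let $\mathrm{sum}(i,j)=z_i+\cdots+z_{j-1}$ and $\mathrm{avg}(i,j)=\mathrm{sum}(i,j)/(j-i)$. Algorithm 1: Initialize $S=\{0,n+1\}$, $y_i=\mathrm{avg}(i,n+1)$ and $x_i=0$ for $i=1,\dots,n$, and $\hat B=K$. While $\hat B>0$ and $S\ne\{0,1,\dots,n+1\}$, perform an iteration: let $i^*$ be the index $i\in\{1,\dots,n\}\setminus S$ minimizing $y_i$, ties broken in favour of the smallest index; let $i_L=\max\{j\in S:j<i^*\}$ and $i_R=\min\{j\in S:j>i^*\}$; set $d=\min\{\hat B/((i_R-i^* )y_{i^*}),\ q_{i^*}-x_{i^*}\}$; set $\hat B\leftarrow\hat B-d(i_R-i^* )y_{i^*}$; set $x_i\leftarrow x_i+d$ for all $i^*\le i<i_R$; set $y_i\leftarrow\mathrm{avg}(i,i^* )$ for all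 $i_L<i<i^*$; add $i^*$ to $S$. When the loop ends, output $x_1,\dots,x_n$. *)

(* Defs.v *)
From HB Require Import structures.
From mathcomp Require Import all_boot all_order all_algebra.
Set Implicit Arguments. Unset Strict Implicit. Unset Printing Implicit Defensive.
Import Order.TTheory GRing.Theory Num.Theory.
Local Open Scope ring_scope.

Section Alg.
Variable R : realFieldType.

(* Indices 1..n of the paper are natural numbers; vectors are nat -> R,
   only their values at 1..n matter. *)

Definition sumz (z : nat -> R) (i j : nat) : R := \sum_(i <= l < j) z l.
Definition avgz (z : nat -> R) (i j : nat) : R := sumz z i j / (j - i)%:R.

Definition feasible (n : nat) (q z : nat -> R) (K : R) (x : nat -> R) : Prop :=
  (forall i, (1 <= i <= n)%N -> 0 <= x i /\ x i <= q i) /\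
  (forall i, (1 <= i < n)%N -> x i <= x i.+1) /\
  \sum_(1 <= i < n.+1) z i * x i <= K.

Definition objective (n : nat) (x : nat -> R) : R := \sum_(1 <= i < n.+1) x i.

Definition optimal (n : nat) (q z : nat -> R) (K : R) (x : nat -> R) : Prop :=
  feasible n q z K x /\
  forall x', feasible n q z K x' -> objective n x' <= objective n x.

(* State of Algorithm 1: the set S (as a list), y, x, and \hat B. *)
Record state := State { stS : seq nat; sty : nat -> R; stx : nat -> R; stB : R }.

Definition init_state (n : nat) (z : nat -> R) (K : R) : state :=
  State [:: 0%N; n.+1] (fun i => avgz z i n.+1) (fun _ => 0) K.

Definition guard (n : nat) (st : state) : bool :=
  (0 < stB st) && has (fun i => i \notin stS st) (iota 1 n).

(* i* : the index in {1..n} \ S minimizing y, smallest index among ties *)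
Definition istar (n : nat) (st : state) : nat :=
  let S := stS st in let y := sty st in
  head 0%N [seq i <- iota 1 n | (i \notin S) &&
                 all (fun j => (j \in S) || (y i <= y j)) (iota 1 n)].

Definition iLeft (st : state) (i : nat) : nat :=
  \max_(j <- stS st | (j < i)%N) j.

(* i_R = min {j in S : j > i*} (the set S always contains n+1) *)
Definition iRight (n : nat) (st : state) (i : nat) : nat :=
  head n.+1 [seq j <- iota i.+1 (n.+1 - i) | j \in stS st].

Definition step (n : nat) (q z : nat -> R) (st : state) : state :=
  let i := istar n st in
  let iL := iLeft st i in
  let iR := iRight n st i in
  let yi := sty st i in
  let d := Num.min (stB st / ((iR - i)%:R * yi)) (q i - stx st i) in
  State (i :: stS st)
        (fun l => if (iL < l < i)%N then avgz z l i else sty st l)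
        (fun l => if (i <= l < iR)%N then stx st l + d else stx st l)
        (stB st - d * (iR - i)%:R * yi).

Inductive exec (n : nat) (q z : nat -> R) : state -> seq nat -> state -> Prop :=
  | exec_stop st : ~~ guard n st -> exec n q z st [::] st
  | exec_step st tr st' : guard n st ->
      exec n q z (step n q z st) tr st' ->
      exec n q z st (istar n st :: tr) st'.

End Alg.

(* Main.v *)
Require Import Defs.
From HB Require Import structures.
From mathcomp Require Import all_boot all_order all_algebra.
From mathcomp Require Import zify ring lra.
Import Order.TTheory GRing.Theory Num.Theory.
Set Implicit Arguments. Unset Strict Implicit. Unset Printing Implicit Defensive.
Local Open Scope ring_scope.

Lemma head_filter_iota (P : pred nat) d m k : has P (iota m k) ->
  let h := head d (filter P (iota m k)) in
  [/\ P h, (m <= h < m + k)%N & forall j, (m <= j < h)%N -> ~~ P j].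
Proof.
elim: k m => [|k IH] m //= /orP [Pm|H].
  rewrite Pm /=; split => //; first lia. move=> j; lia.
case Pm: (P m).
  rewrite /=; split => //; first lia. move=> j; lia.
have [Ph Hh Hb] := IH m.+1 H; split => //; first lia.
move=> j Hj; case: (j =P m) => [->|ne]; first by rewrite Pm.
apply: Hb; lia.
Qed.

Lemma bigmax_in (s : seq nat) (P : pred nat) : has P s ->
  ((\max_(j <- s | P j) j) \in s) && P (\max_(j <- s | P j) j).
Proof.
elim: s => [|a s IH] //=; rewrite big_cons.
case Pa: (P a) => /=.
  case Hs: (has P s).
    move/andP: (IH Hs) => [H1 H2] _.
    case: (leqP a (\max_(j <- s | P j) j)) => h.
      by rewrite inE H1 orbT H2.
    by rewrite inE eqxx Pa.
  have -> : \max_(j <- s | P j) j = 0%N.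
    rewrite big_seq_cond big1 // => j /andP [js Pj].
    by move/hasPn: (negbT Hs) => /(_ j js); rewrite Pj.
  by rewrite maxn0 inE eqxx Pa.
move=> H; move/andP: (IH H) => [H1 H2]; by rewrite inE H1 orbT H2.
Qed.

Lemma exists_min (R : realFieldType) (f : nat -> R) (Q : pred nat) (s : seq nat) :
  has Q s -> exists2 i, (i \in s) && Q i & forall j, j \in s -> Q j -> f i <= f j.
Proof.
elim: s => [|a s IH] //= /orP [Qa|H].
  case Hs: (has Q s).
    have [i /andP [si Qi] Hi] := IH Hs.
    case: (lerP (f a) (f i)) => h.
      exists a; first by rewrite inE eqxx Qa.
      move=> j; rewrite inE => /orP [/eqP ->|js Qj] //; exact: le_trans h (Hi j js Qj).
    exists i; first by rewrite inE si orbT Qi.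
    move=> j; rewrite inE => /orP [/eqP ->|js Qj] //; first by move=> _; exact: ltW.
    exact: Hi.
  exists a; first by rewrite inE eqxx Qa.
  move=> j; rewrite inE => /orP [/eqP ->|js Qj] //.
  by move/hasPn: (negbT Hs) => /(_ j js); rewrite Qj.
have [i /andP [si Qi] Hi] := IH H.
case Qa: (Q a).
  case: (lerP (f a) (f i)) => h.
    exists a; first by rewrite inE eqxx Qa.
    move=> j; rewrite inE => /orP [/eqP ->|js Qj] //; exact: le_trans h (Hi j js Qj).
  exists i; first by rewrite inE si orbT Qi.
  move=> j; rewrite inE => /orP [/eqP ->|js Qj] //; first by move=> _; exact: ltW.
  exact: Hi.
exists i; first by rewrite inE si orbT Qi.
move=> j; rewrite inE => /orP [/eqP ->|js Qj] //; first by rewrite Qa.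
exact: Hi.
Qed.

Section Proof5.
Variable R : realFieldType.
Variables (n : nat) (q z : nat -> R) (K : R).
Hypothesis hn : (1 <= n)%N.
Hypothesis hq0 : forall i, (1 <= i <= n)%N -> 0 < q i.
Hypothesis hqmono : forall i, (1 <= i < n)%N -> q i <= q i.+1.
Hypothesis hz : forall i, (1 <= i <= n)%N -> 0 < z i.
Hypothesis hK : 0 < K.

Local Notation NS st j := (iRight n st j).

Lemma iRight_spec (st : state R) j : n.+1 \in stS st -> (j <= n)%N ->
  [/\ NS st j \in stS st, (j < NS st j <= n.+1)%N &
      forall k, (j < k < NS st j)%N -> k \notin stS st].
Proof.
move=> Hn Hj; rewrite /iRight.
have H : has (fun k => k \in stS st) (iota j.+1 (n.+1 - j)).
  apply/hasP; exists n.+1 => //; rewrite mem_iota; lia.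
have [P1 P2 P3] := head_filter_iota n.+1 H.
move: P1 P2 P3; set h := head _ _ => P1 P2 P3; split => //; first lia.
Qed.

Lemma iRight_char (st : state R) j m : n.+1 \in stS st -> (j <= n)%N ->
  m \in stS st -> (j < m)%N -> (forall k, (j < k < m)%N -> k \notin stS st) ->
  NS st j = m.
Proof.
move=> Hn Hj Hm Hjm Hb; have [N1 N2 N3] := iRight_spec Hn Hj.
case: (ltngtP m (NS st j)) => // h; exfalso.
  suff: m \notin stS st by rewrite Hm.
  apply: N3; lia.
suff: NS st j \notin stS st by rewrite N1.
apply: Hb; lia.
Qed.

Lemma istar_spec (st : state R) : guard n st ->
  [/\ (1 <= istar n st <= n)%N, istar n st \notin stS st,
   (forall j, (1 <= j <= n)%N -> j \notin stS st -> sty st (istar n st) <= sty st j) &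
   (forall j, (1 <= j < istar n st)%N -> j \notin stS st -> sty st (istar n st) < sty st j)].
Proof.
move=> /andP [_ Hg]; rewrite /istar /=.
set P := fun i => (i \notin stS st) &&
   all (fun j => (j \in stS st) || (sty st i <= sty st j)) (iota 1 n).
have HP : has P (iota 1 n).
  have [i /andP [ii Qi] Hi] := exists_min (sty st) Hg.
  apply/hasP; exists i => //; rewrite /P Qi /=; apply/allP => j jj.
  case: (boolP (j \in stS st)) => //= jS; exact: Hi.
have [P1 P2 P3] := head_filter_iota 0 HP.
move: P1 P2 P3; set h := head _ _ => P1 P2 P3; clearbody h.
move/andP: P1 => [Pa Pb]; split; [by clear -P2; lia| exact: Pa | |].
  move=> j Hj jS; move/allP: Pb => /(_ j); rewrite mem_iota (negbTE jS) /=; apply; lia.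
move=> j Hj jS; have := P3 j; rewrite /P jS /= => /(_ Hj) /allPn [k kk].
rewrite negb_or => /andP [kS]; rewrite -ltNge => hk.
move/allP: Pb => /(_ k kk); rewrite (negbTE kS) /= => hk2.
exact: le_lt_trans hk2 hk.
Qed.

Lemma iLeft_spec (st : state R) i : 0%N \in stS st -> (0 < i)%N ->
  [/\ iLeft st i \in stS st, (iLeft st i < i)%N &
      forall k, k \in stS st -> (k < i)%N -> (k <= iLeft st i)%N].
Proof.
move=> H0 Hi.
have Hh : has (fun j => (j < i)%N) (stS st) by apply/hasP; exists 0%N.
move/andP: (bigmax_in Hh) => [A B]; split => //.
move=> k kS ki; rewrite /iLeft; exact: (leq_bigmax_seq (F := fun j => j) k kS ki).
Qed.


Lemma sumz_split a b c : (a <= b <= c)%N -> sumz z a c = sumz z a b + sumz z b c.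
Proof. by move=> /andP [h1 h2]; rewrite /sumz (big_cat_nat h1 h2). Qed.

Lemma sumz_cons a b : (a < b)%N -> sumz z a b = z a + sumz z a.+1 b.
Proof. by move=> h; rewrite /sumz big_ltn. Qed.

Lemma sumz_ge0 a b : (1 <= a)%N -> (b <= n.+1)%N -> 0 <= sumz z a b.
Proof.
move=> ha hb; rewrite /sumz big_nat_cond; apply: sumr_ge0 => i /andP [/andP [h1 h2] _].
apply: ltW; apply: hz; apply/andP; split; [exact: leq_trans ha h1 | ].
by rewrite -ltnS; apply: leq_trans hb.
Qed.

Lemma sumz_gt0 a b : (1 <= a)%N -> (a < b)%N -> (b <= n.+1)%N -> 0 < sumz z a b.
Proof.
move=> ha hab hb; rewrite sumz_cons //.
apply: ltr_wpDr; first exact: sumz_ge0.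
apply: hz; rewrite ha /=; rewrite -ltnS; exact: leq_trans hab hb.
Qed.

Lemma natrBpos a b : (a < b)%N -> 0 < (b%:R - a%:R : R).
Proof. by move=> h; rewrite subr_gt0 ltr_nat. Qed.

Lemma avg_ge (r : R) a b : (a < b)%N ->
  (r <= avgz z a b) = (r * (b%:R - a%:R) <= sumz z a b).
Proof.
move=> h; rewrite /avgz natrB ?ler_pdivlMr //; [exact: natrBpos | exact: ltnW].
Qed.

Lemma avg_gt (r : R) a b : (a < b)%N ->
  (r < avgz z a b) = (r * (b%:R - a%:R) < sumz z a b).
Proof.
move=> h; rewrite /avgz natrB ?ltr_pdivlMr //; [exact: natrBpos | exact: ltnW].
Qed.

Lemma avg_eq a b : (a < b)%N -> avgz z a b * (b%:R - a%:R) = sumz z a b.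
Proof.
move=> h; rewrite /avgz natrB ?divfK //; last exact: ltnW.
by rewrite gt_eqF // natrBpos.
Qed.

Lemma qmono a b : (1 <= a)%N -> (a <= b)%N -> (b <= n)%N -> q a <= q b.
Proof.
move=> ha hab hb.
have H : forall k, (a + k <= n)%N -> q a <= q (a + k).
  elim=> [|k IH] hk; first by rewrite addn0.
  rewrite addnS; apply: le_trans (IH _) _; first by lia.
  apply: hqmono; lia.
have := H (b - a)%N; rewrite subnKC //; apply; done.
Qed.

Definition Gf (r : R) (st : state R) j :=
  r * ((NS st j)%:R - j%:R) - sumz z j (NS st j).

Record Inv (r : R) (st : state R) : Prop := {
  I0 : 0%N \in stS st;
  In1 : n.+1 \in stS st;
  Ix0 : stx st 0 = 0;
  Ixc : forall j, (1 <= j <= n)%N -> j \notin stS st -> stx st j = stx st j.-1;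
  Ixb : forall j, (1 <= j <= n)%N -> 0 <= stx st j /\ stx st j <= q j;
  Ixm : forall j, (1 <= j < n)%N -> stx st j <= stx st j.+1;
  Ixs : forall j, (1 <= j <= n)%N -> j \in stS st ->
          stx st j = q j \/ (stB st = 0 /\ Gf r st j = 0);
  IB : 0 <= stB st;
  Isum : \sum_(1 <= i < n.+1) z i * stx st i = K - stB st;
  Iy : forall j, (1 <= j <= n)%N -> j \notin stS st ->
          sty st j = avgz z j (NS st j) /\ r <= sty st j;
  IG : forall j, (1 <= j <= n)%N -> j \in stS st -> 0 <= Gf r st j;
  Ir : 0 <= r }.

Lemma NS_step (st : state R) j : n.+1 \in stS st -> (j <= n)%N ->
  let i := istar n st in i \notin stS st ->
  NS (step n q z st) j = if (j < i < NS st j)%N then i else NS st j.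
Proof.
move=> Hn Hj i iS.
have [N1 N2 N3] := iRight_spec Hn Hj.
have HS : stS (step n q z st) = i :: stS st by [].
have Hn' : n.+1 \in stS (step n q z st) by rewrite HS inE Hn orbT.
case: ifP => h.
  apply: iRight_char => //; first by rewrite HS inE eqxx.
  - by clear -h; lia.
  move=> k hk; rewrite HS inE negb_or; apply/andP; split.
    by apply/eqP => e; rewrite e in hk; clear -hk; lia.
  apply: N3; clear -h hk; lia.
apply: iRight_char => //; first by rewrite HS inE N1 orbT.
  by clear -N2; lia.
move=> k hk; rewrite HS inE negb_or; apply/andP; split; last exact: N3.
apply/eqP => e; rewrite e in hk; move/negbT: h; clear -hk; lia.
Qed.

Lemma step_inv (r : R) (st : state R) : Inv r st -> guard n st ->
  Inv (sty st (istar n st)) (step n q z st) /\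
  0 < sty st (istar n st) /\ r <= sty st (istar n st).
Proof.
move=> I g.
have [i1 iS imin istrict] := istar_spec g.
have Bpos : 0 < stB st by case/andP: g.
set st' := step n q z st.
set i := istar n st in i1 iS imin istrict st' *.
have HS : stS st' = i :: stS st by [].
have Hy : forall l, sty st' l =
   if (iLeft st i < l < i)%N then avgz z l i else sty st l by [].
have Hn' : (i <= n)%N by case/andP: i1.
have [N1 N2 N3] := iRight_spec (In1 I) Hn'.
have i0 : (0 < i)%N by case/andP: i1.
have [L1 L2 L3] := iLeft_spec (I0 I) i0.
have HN : forall j, (j <= n)%N ->
    NS st' j = if (j < i < NS st j)%N then i else NS st j.
  by move=> j hj; apply: NS_step => //; exact: In1 I.
set iR := NS st i in N1 N2 N3 HN *.
set iL := iLeft st i in L1 L2 L3 Hy *.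
have [yi ry] := Iy I i1 iS.
have sp : 0 < sumz z i iR.
  apply: sumz_gt0; [by case/andP: i1 | by case/andP: N2 | by case/andP: N2].
have yeq : sty st i * (iR%:R - i%:R) = sumz z i iR.
  by rewrite yi avg_eq //; case/andP: N2.
have r'pos : 0 < sty st i.
  by rewrite yi /avgz divr_gt0 // ltr0n subn_gt0; case/andP: N2.
have Deq : (iR - i)%:R * sty st i = sumz z i iR.
  by rewrite mulrC natrB ?yeq //; case/andP: N2 => /ltnW.
pose d := Num.min (stB st / ((iR - i)%:R * sty st i)) (q i - stx st i).
have Hx : forall l, stx st' l =
   if (i <= l < iR)%N then stx st l + d else stx st l by move=> l; reflexivity.
have HB : stB st' = stB st - d * sumz z i iR by rewrite -Deq mulrA; reflexivity.
have dE : d = Num.min (stB st / sumz z i iR) (q i - stx st i) by rewrite /d Deq.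
clearbody d st'.
have [xi0 xiq] := Ixb I i1.
have d0 : 0 <= d.
  by rewrite dE le_min divr_ge0 ?subr_ge0 ?xiq ?ltW.
have dq : d <= q i - stx st i by rewrite dE ge_min lexx orbT.
have dB : d * sumz z i iR <= stB st.
  by rewrite -ler_pdivlMr // dE ge_min lexx.
have xconst : forall l, (i <= l < iR)%N -> stx st l = stx st i.
  have H : forall k, (i + k < iR)%N -> stx st (i + k) = stx st i.
    elim=> [|k IH] hk; first by rewrite addn0.
    have hk1 : (1 <= i + k.+1 <= n)%N by move: hk i1 N2; clear; lia.
    have hk2 : (i + k.+1) \notin stS st by apply: N3; move: hk; clear; lia.
    rewrite (Ixc I hk1 hk2) addnS /= IH //; move: hk; clear; lia.
  move=> l /andP [h1 h2]; have := H (l - i)%N; rewrite subnKC //; apply.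
  by move: h1 h2; clear; lia.
have notblk : forall j, j \in stS st -> ~~ (i <= j < iR)%N.
  move=> j jS; apply/negP => /andP [h1 h2].
  case: (ltngtP i j) h1 => // h h1.
    by move: (N3 j); rewrite h h2 jS => /(_ isT).
  by move: iS; rewrite h jS.
have xiR : (iR <= n)%N -> stx st iR = q iR.
  move=> h; have hR : (1 <= iR <= n)%N.
    by case/andP: N2 => h2 _; rewrite h andbT; move: h2 i0; clear; lia.
  case: (Ixs I hR N1) => [//|[e _]]; by rewrite e ltxx in Bpos.
have qiR : forall l, (i <= l <= n)%N -> q i <= q l.
  move=> l /andP [h1 h2]; apply: qmono => //; by case/andP: i1.
split; last by split.
constructor.
- by rewrite HS inE (I0 I) orbT.
- by rewrite HS inE (In1 I) orbT.
- rewrite Hx; case: ifP => [/andP [h _]|_]; last exact: Ix0 I.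
  by move: h i0; clear; lia.
- move=> j hj; rewrite HS inE negb_or => /andP [ji jS].
  have jR : j != iR by apply: contraNneq jS => ->.
  rewrite !Hx (Ixc I hj jS).
  case: ifP => h1; case: ifP => h2 //.
  + exfalso; move/negbT: h2; move: h1 ji jR; clear; lia.
  + exfalso; move/negbT: h1; move: h2 ji jR hj; clear; lia.
- move=> j hj; rewrite Hx; have [xj0 xjq] := Ixb I hj.
  case: ifP => h //; split; first exact: addr_ge0.
  rewrite xconst //; apply: le_trans (qiR j _); last by case/andP: hj => _ ->; rewrite andbT; case/andP: h.
  by move: dq; lra.
- move=> j hj; rewrite !Hx; have hm := Ixm I hj.
  case: ifP => h1; case: ifP => h2.
  + by rewrite lerD2r.
  + have ejR : j.+1 = iR by move/negbT: h2; move: h1; clear; lia.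
    have hR : (iR <= n)%N by rewrite -ejR; case/andP: hj.
    rewrite xconst // ejR xiR //.
    apply: le_trans (qmono i0 _ hR); first by move: dq; lra.
    by case/andP: N2 => /ltnW.
  + by apply: (le_trans hm); rewrite lerDl.
  + exact: hm.
- move=> j hj; rewrite HS inE => /orP [/eqP -> | jS].
    case: (leP (stB st / sumz z i iR) (q i - stx st i)) => h.
      right; split.
        by rewrite HB dE (min_l h) divfK ?subrr // gt_eqF.
      by rewrite /Gf HN // ltnn /= yeq subrr.
    left; rewrite Hx ifT; last by rewrite leqnn; case/andP: N2.
    by rewrite dE (min_r (ltW h)) addrC subrK.
  left; have [//|[e _]] := Ixs I hj jS; last by rewrite e ltxx in Bpos.
  by rewrite Hx ifF //; apply/negbTE; exact: notblk.
- by rewrite HB subr_ge0.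
- have E : \sum_(1 <= l < n.+1) z l * stx st' l =
     \sum_(1 <= l < n.+1) z l * stx st l +
     \sum_(1 <= l < n.+1) (if (i <= l < iR)%N then z l * d else 0).
    rewrite -big_split; apply: eq_bigr => l _; rewrite Hx.
    by case: ifP => _; rewrite /= ?mulrDr ?addr0.
  rewrite E (Isum I) HB.
  have -> : \sum_(1 <= l < n.+1) (if (i <= l < iR)%N then z l * d else 0) =
            d * sumz z i iR.
    have h1 : (1 <= i)%N by case/andP: i1.
    have h2 : (i <= iR)%N by case/andP: N2 => /ltnW.
    have h3 : (iR <= n.+1)%N by case/andP: N2.
    rewrite (big_cat_nat h1 (leq_trans h2 h3)) /= (big_cat_nat h2 h3) /=.
    rewrite big1_seq; last first.
      move=> l /andP [_]; rewrite mem_index_iota => hl; rewrite ifF //.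
      by apply/negbTE; move: hl; clear; lia.
    rewrite [X in _ + (_ + X)]big1_seq; last first.
      move=> l /andP [_]; rewrite mem_index_iota => hl; rewrite ifF //.
      by apply/negbTE; move: hl; clear; lia.
    rewrite add0r addr0 /sumz mulr_sumr big_nat_cond [RHS]big_nat_cond.
    apply: eq_bigr => l /andP [hl _]; by rewrite hl mulrC.
  by ring.
- move=> j hj; rewrite HS inE negb_or => /andP [ji jS].
  have [yj ryj] := Iy I hj jS.
  have hjn : (j <= n)%N by case/andP: hj.
  rewrite Hy HN //.
  case: ifP => hL.
    have NjiR : NS st j = iR.
      apply: iRight_char => //; first exact: In1 I.
        by move: hL N2; clear; lia.
      move=> k hk; case: (ltngtP k i) => hki.
      + apply/negP => kS; have := L3 k kS hki; move: hL hk; clear; lia.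
      + by apply: N3; move: hk hki; clear; lia.
      + by rewrite hki.
    rewrite NjiR ifT; last by move: hL N2; clear; lia.
    split => //.
    have hji : (j < i)%N by move: hL; clear; lia.
    rewrite avg_ge //.
    have := istrict j _ jS; rewrite yj NjiR avg_gt; last by move: hL N2; clear; lia.
    move=> /(_ _).
    have hj1 : (1 <= j < i)%N by move: hL hj; clear; lia.
    move=> /(_ hj1).
    rewrite (@sumz_split j i iR); last by move: hji N2; clear; lia.
    move: yeq; set a := sty st i.
    have e : a * (iR%:R - j%:R) = a * (iR%:R - i%:R) + a * (i%:R - j%:R) by ring.
    rewrite e; move=> ye; rewrite ye; lra.
  have c : (j < i < NS st j)%N = false.
    apply/negbTE/negP => /andP [h1 h2].
    have : (j <= iL)%N by move/negbT: hL; move: h1; clear; lia.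
    rewrite leq_eqVlt => /orP [/eqP ejL | hjL].
      by move: jS; rewrite ejL L1.
    have [M1 M2 M3] := iRight_spec (In1 I) hjn.
    case: (ltnP iL (NS st j)) => hh.
      by move: (M3 iL); rewrite L1 hjL hh => /(_ isT).
    by move: hh h2 L2; clear; lia.
  rewrite c; split => //; exact: imin.
- move=> j hj; rewrite HS inE => /orP [/eqP -> | jS].
    by rewrite /Gf HN // ltnn /= yeq subrr.
  have hjn : (j <= n)%N by case/andP: hj.
  have G0 := IG I hj jS.
  have [M1 M2 M3] := iRight_spec (In1 I) hjn.
  rewrite /Gf HN //; case: ifP => c.
    have NjiR : NS st j = iR.
      apply/eqP; rewrite eqn_leq; apply/andP; split.
        rewrite leqNgt; apply/negP => h.
        have hh : (j < iR < NS st j)%N by move: c h N2; clear; lia.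
        by move: (M3 iR hh); rewrite N1.
      rewrite leqNgt; apply/negP => h.
      have hh : (i < NS st j < iR)%N by move: c h; clear; lia.
      by move: (N3 _ hh); rewrite M1.
    move: G0; rewrite /Gf NjiR (@sumz_split j i iR); last by move: c N2; clear; lia.
    move: yeq; set a := sty st i => ye.
    have hA : 0 <= (iR%:R - j%:R : R) by rewrite subr_ge0 ler_nat; move: c N2; clear; lia.
    have hr : r * (iR%:R - j%:R) <= a * (iR%:R - j%:R) by apply: ler_wpM2r.
    have e : a * (iR%:R - j%:R) = a * (iR%:R - i%:R) + a * (i%:R - j%:R) by ring.
    move: hr; rewrite e ye; lra.
  move: G0; rewrite /Gf.
  have hA : 0 <= ((NS st j)%:R - j%:R : R) by rewrite subr_ge0 ler_nat; move: M2; clear; lia.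
  have hr : r * ((NS st j)%:R - j%:R) <= sty st i * ((NS st j)%:R - j%:R) by apply: ler_wpM2r.
  lra.
- exact: ltW.
Qed.

Lemma init_inv : Inv 0 (init_state n z K).
Proof.
have hS : stS (init_state n z K) = [:: 0%N; n.+1] by [].
constructor.
- by rewrite /= inE eqxx.
- by rewrite /= !inE eqxx orbT.
- by [].
- by [].
- move=> j hj; split; [exact: lexx | exact: ltW (hq0 hj)].
- by move=> j _; exact: lexx.
- move=> j hj; rewrite /= !inE => /orP [/eqP e | /eqP e]; exfalso; move: hj e; clear; lia.
- exact: ltW.
- by rewrite /= big1 ?subrr // => l _; rewrite mulr0.
- move=> j hj jS.
  have hjn : (j <= n)%N by case/andP: hj.
  have -> : NS (init_state n z K) j = n.+1.
    apply: iRight_char => //; rewrite /= ?inE ?eqxx ?orbT //;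
      try (by move: hj; clear; lia).
    move=> k hk; rewrite /= !inE negb_or; apply/andP; split; apply/eqP => e;
      move: hk e; clear; lia.
  split => //; rewrite /avgz divr_ge0 //; apply: sumz_ge0 => //.
  by case/andP: hj.
- move=> j hj; rewrite /= !inE => /orP [/eqP e | /eqP e]; exfalso; move: hj e; clear; lia.
- exact: lexx.
Qed.

Lemma exec_inv st tr fin : exec n q z st tr fin -> forall r, Inv r st ->
  exists r', [/\ Inv r' fin, r <= r', ~~ guard n fin & (guard n st -> 0 < r')].
Proof.
elim => [st0 ng | st0 tr0 st1 gd ex IH] r I.
  exists r; split; [exact: I | exact: lexx | exact: ng | by move=> g; rewrite g in ng].
have [I' [rp rl]] := step_inv I gd.
have [r'' [I'' h1 h2 h3]] := IH _ I'.
exists r''; split => //; first exact: le_trans rl h1.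
by move=> _; exact: lt_le_trans rp h1.
Qed.

Lemma Gf_rec r st i : Inv r st -> (1 <= i <= n)%N ->
  r - z i = Gf r st i - (if i.+1 \in stS st then 0 else Gf r st i.+1).
Proof.
move=> I hi; have hin : (i <= n)%N by case/andP: hi.
have e1 : (i.+1)%:R = i%:R + 1 :> R by rewrite -addn1 natrD.
case: ifP => h.
  have E2 : NS st i = i.+1.
    apply: iRight_char => //; first exact: In1 I.
    by move=> k hk; exfalso; move: hk; clear; lia.
  rewrite /Gf E2 /sumz big_nat1 e1; ring.
have hi1 : (i.+1 <= n)%N.
  rewrite ltn_neqAle hin andbT; apply/negP => /eqP e.
  by move: h; rewrite e (In1 I).
have [M1 M2 M3] := iRight_spec (In1 I) hi1.
have E2 : NS st i = NS st i.+1.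
  apply: iRight_char => //; first exact: In1 I.
    by move: M2; clear; lia.
  move=> k hk; case: (eqVneq k i.+1) => [->|ne]; first by rewrite h.
  by apply: M3; move: hk ne; clear; lia.
rewrite /Gf E2 (@sumz_cons i); last by move: M2; clear; lia.
rewrite e1; ring.
Qed.

Lemma phi_identity r st (w : nat -> R) : Inv r st ->
  r * \sum_(1 <= i < n.+1) w i - \sum_(1 <= i < n.+1) z i * w i =
  \sum_(1 <= j < n.+1) (if j \in stS st then Gf r st j * w j
      else Gf r st j * (w j - (if (j <= 1)%N then 0 else w j.-1))).
Proof.
move=> I.
set E := fun i => if i.+1 \in stS st then 0 else Gf r st i.+1.
have L : r * \sum_(1 <= i < n.+1) w i - \sum_(1 <= i < n.+1) z i * w i =
   \sum_(1 <= i < n.+1) Gf r st i * w i - \sum_(1 <= i < n.+1) E i * w i.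
  rewrite mulr_sumr -!sumrB; apply: eq_big_nat => i hi.
  have hi' : (1 <= i <= n)%N by move: hi; clear; lia.
  rewrite -mulrBl -mulrBl -/(E i) -(Gf_rec I hi'); ring.
set F := fun j => if j \in stS st then 0
   else Gf r st j * (if (j <= 1)%N then 0 else w j.-1).
have Rr : \sum_(1 <= j < n.+1) (if j \in stS st then Gf r st j * w j
      else Gf r st j * (w j - (if (j <= 1)%N then 0 else w j.-1))) =
   \sum_(1 <= i < n.+1) Gf r st i * w i - \sum_(1 <= i < n.+1) F i.
  rewrite -sumrB; apply: eq_bigr => j _; rewrite /F.
  by case: ifP => _; rewrite ?subr0 // mulrBr.
rewrite L Rr; congr (_ - _).
rewrite (big_nat_recr n 1 _ hn) (big_nat_recl n 1 _ hn) /=.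
rewrite /E /F (In1 I) mul0r addr0 /= [X in _ = X + _]/=.
have -> : (if 1%N \in stS st then 0 else Gf r st 1 * 0) = 0.
  by case: ifP => _ //; rewrite mulr0.
rewrite add0r; apply: eq_big_nat => i hi.
have -> : (i.+1 <= 1)%N = false by move: hi; clear; lia.
by case: ifP => _ //; rewrite mul0r.
Qed.

Lemma main_sec tr (fin : state R) :
  exec n q z (init_state n z K) tr fin ->
  exists xs : nat -> R, optimal n q z K xs /\
    forall j, j \in tr -> xs j = stx fin j.
Proof.
move=> hex.
have gi : guard n (init_state n z K).
  rewrite /guard /= hK /=; apply/hasP; exists 1%N.
    by rewrite mem_iota; move: hn; clear; lia.
  by rewrite !inE negb_or; apply/andP; split; apply/eqP => e; move: e hn; clear; lia.
have [r [I _ ng gp]] := exec_inv hex init_inv.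
have rpos := gp gi.
exists (stx fin); split => //.
have feas : feasible n q z K (stx fin).
  split; first exact: (Ixb I).
  split; first exact: (Ixm I).
  by rewrite (Isum I) lerBlDr lerDl (IB I).
split => // x' [fb [fm fs]].
rewrite /objective.
case: (eqVneq (stB fin) 0) => hB.
  have key : \sum_(1 <= j < n.+1) (if j \in stS fin then Gf r fin j * x' j
      else Gf r fin j * (x' j - (if (j <= 1)%N then 0 else x' j.-1))) <=
     \sum_(1 <= j < n.+1) (if j \in stS fin then Gf r fin j * stx fin j
      else Gf r fin j * (stx fin j - (if (j <= 1)%N then 0 else stx fin j.-1))).
    apply: ler_sum_nat => j hj0.
    have hj : (1 <= j <= n)%N by move: hj0; clear; lia.
    have hjn : (j <= n)%N by case/andP: hj.
    case: ifP => jS.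
      case: (Ixs I hj jS) => [e | [_ e]]; last by rewrite e !mul0r.
      rewrite e; apply: ler_wpM2l; [exact: (IG I hj jS) | exact: (fb j hj).2].
    move/negbT: jS => jS.
    have -> : stx fin j - (if (j <= 1)%N then 0 else stx fin j.-1) = 0.
      rewrite (Ixc I hj jS); case: ifP => h; last by rewrite subrr.
      have e1 : j = 1%N by move: h hj; clear; lia.
      by rewrite e1 /= (Ix0 I) subrr.
    rewrite mulr0; apply: mulr_le0_ge0.
      have [yj ryj] := Iy I hj jS.
      have [M1 M2 M3] := iRight_spec (In1 I) hjn.
      move: ryj; rewrite yj avg_ge; last by case/andP: M2.
      by rewrite /Gf subr_le0.
    case: ifP => h; first by rewrite subr0; exact: (fb j hj).1.
    rewrite subr_ge0.
    have hj1 : (1 <= j.-1 < n)%N by move: h hj; clear; lia.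
    have := fm _ hj1; rewrite prednK //; move: h; clear; lia.
  rewrite -!(phi_identity _ I) (Isum I) hB subr0 in key.
  rewrite -(ler_pM2l rpos); move: key fs; lra.
have Bp : 0 < stB fin by rewrite lt_def hB (IB I).
move: ng; rewrite /guard Bp /= => /hasPn hall.
apply: ler_sum_nat => j hj0.
have hj : (1 <= j <= n)%N by move: hj0; clear; lia.
have jS : j \in stS fin.
  have := hall j; rewrite mem_iota negbK; apply; move: hj; clear; lia.
case: (Ixs I hj jS) => [-> | [e _]]; first exact: (fb j hj).2.
by rewrite e eqxx in hB.
Qed.
End Proof5.

Theorem lemma5 (R : realFieldType) (n : nat) (q z : nat -> R) (K : R)
  (hn : (1 <= n)%N)
  (hq0 : forall i, (1 <= i <= n)%N -> 0 < q i)
  (hqmono : forall i, (1 <= i < n)%N -> q i <= q i.+1)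
  (hz : forall i, (1 <= i <= n)%N -> 0 < z i)
  (hK : 0 < K)
  (tr : seq nat) (fin : state R) :
  exec n q z (init_state n z K) tr fin ->
  exists xs : nat -> R, optimal n q z K xs /\
    forall j, j \in tr -> xs j = stx fin j.
Proof.
exact: main_sec.
Qed.
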